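(* Let a particle of mass $m>0$ and charge $q$ move under the relativistic Lorentz force in an electromagnetic field whose potential $A^\mu(t,\mathbf x)=A^\mu(t,z)$ does not depend on the transverse coordinates $x,y$. Then for every motion there is a constant $\mathbf K^{\perp}\in\mathbb R^2$ such that, parametrizing by $\xi=ct-z$, $$\hat{\mathbf u}^{\perp}(\xi)=\frac{q}{mc^2}\big[\mathbf K^{\perp}-\hat{\mathbf A}^{\perp}(\xi,\hat z(\xi))\big],$$ and, setting $\hat v(\xi,z):=\big(\tfrac{q}{mc^2}\big)^2|\mathbf K^{\perp}-\hat{\mathbf A}^{\perp}(\xi,z)|^2$, the pair $(\hat z,\hat s)$ solves the one-degree-of-freedom system $$\hat z'=\frac{1+\hat v(\xi,\hat z)}{2\hat s^2}-\frac12,\qquad mc^2\hat s'=-q\hat E^z(\xi,\hat z)+\frac{mc^2}{2\hat s}\frac{\partial\hat v}{\partial z}(\xi,\hat z).$$ The remaining unknowns are then obtained as $\hat{\mathbf x}(\xi)=\hat{\mathbf x}(\xi_0)+\int_{\xi_0}^{\xi}d\zeta\,\hat{\mathbf u}(\zeta)/\hat s(\zeta)$ (with $\hat u^z=\hat\gamma-\hat s$, $\hat\gamma=(1+\hat v+\hat s^2)/(2\hat s)$) and $c\,\hat t(\xi)=\xi+\hat z(\xi)$; inverting the strictly increasing map $\xi\mapsto\hat t(\xi)$ gives $\mathbf x(t)=\hat{\mathbf x}(\xi(t))$.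
   Context: Coordinates $\mathbf x=(x,y,z)$, $\perp$ denotes $(x,y)$-components; $\mathbf E=-\partial_t\mathbf A/c-\nabla A^0$, $\mathbf B=\nabla\wedge\mathbf A$. Equations of motion: $\dot{\mathbf p}=q\mathbf E+\frac{\mathbf p}{\sqrt{m^2c^2+\mathbf p^2}}\wedge q\mathbf B$, $\dot{\mathbf x}=c\mathbf p/\sqrt{m^2c^2+\mathbf p^2}$. $\mathbf u=\mathbf p/mc$, $\gamma=\sqrt{1+\mathbf u^2}$, $s=\gamma-u^z>0$. Since $|\dot{\mathbf x}|<c$, $\xi(t)=ct-z(t)$ is strictly increasing; $\hat f(\xi)$ denotes a dynamical variable as a function of $\xi$; for a field $f(t,z)$, $\hat f(\xi,z):=f((\xi+z)/c,z)$; prime is $d/d\xi$. *)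

(* Defs.v *)
From Stdlib Require Import Reals.
From Coquelicot Require Import Coquelicot.
Open Scope R_scope.

(* Fields are functions f(t,z) of time and longitudinal coordinate only:
   the potential A^mu(t,x) = A^mu(t,z) does not depend on x, y. *)
Definition partial_t (f : R -> R -> R) (t z : R) : R := Derive (fun t' => f t' z) t.
Definition partial_z (f : R -> R -> R) (t z : R) : R := Derive (fun z' => f t z') z.

Definition differentiable2 (f : R -> R -> R) : Prop :=
  forall t z, differentiable_pt_lim f t z (partial_t f t z) (partial_z f t z).

(* E = - d_t A / c - grad A^0, B = curl A, with d_x = d_y = 0 on all potentials. *)
Definition Efx (c : R) (Ax : R -> R -> R) (t z : R) : R := - partial_t Ax t z / c.
Definition Efy (c : R) (Ay : R -> R -> R) (t z : R) : R := - partial_t Ay t z / c.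
Definition Efz (c : R) (A0 Az : R -> R -> R) (t z : R) : R :=
  - partial_t Az t z / c - partial_z A0 t z.
Definition Bfx (Ay : R -> R -> R) (t z : R) : R := 0 - partial_z Ay t z.
Definition Bfy (Ax : R -> R -> R) (t z : R) : R := partial_z Ax t z - 0.
Definition Bfz (t z : R) : R := 0 - 0.

Definition hatF (c : R) (f : R -> R -> R) (xi z : R) : R := f ((xi + z) / c) z.

Definition pnorm (c m px py pz : R) : R := sqrt (m^2 * c^2 + (px^2 + py^2 + pz^2)).

Definition vhat (c m q Kx Ky : R) (Ax Ay : R -> R -> R) (xi z : R) : R :=
  (q / (m * c^2))^2 * ((Kx - hatF c Ax xi z)^2 + (Ky - hatF c Ay xi z)^2).

(* Main.v *)
Require Import Defs.
From Stdlib Require Import Reals Lra Ranalysis5 Psatz.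
From Coquelicot Require Import Coquelicot.
Open Scope R_scope.

Definition inI (a b : Rbar) (t : R) := Rbar_lt a t /\ Rbar_lt t b.

Lemma I_conv a b t1 t2 t : inI a b t1 -> inI a b t2 -> t1 <= t <= t2 -> inI a b t.
Proof.
  intros [H1 H2] [H3 H4] [H5 H6]; split.
  - destruct a as [r| |]; simpl in *; try easy; lra.
  - destruct b as [r| |]; simpl in *; try easy; lra.
Qed.

Lemma I_left a b t : inI a b t -> exists t1, inI a b t1 /\ t1 < t.
Proof.
  intros [H1 H2]. destruct a as [r| |]; simpl in *; try easy.
  - exists ((r + t)/2). split; [split|]; simpl; try lra.
    destruct b as [r'| |]; simpl in *; try easy; lra.
  - exists (t - 1). split; [split|]; simpl; try easy; try lra.
    destruct b as [r'| |]; simpl in *; try easy; lra.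
Qed.

Lemma I_right a b t : inI a b t -> exists t2, inI a b t2 /\ t < t2.
Proof.
  intros [H1 H2]. destruct b as [r| |]; simpl in *; try easy.
  - exists ((r + t)/2). split; [split|]; simpl; try lra.
    destruct a as [r'| |]; simpl in *; try easy; lra.
  - exists (t + 1). split; [split|]; simpl; try easy; try lra.
    destruct a as [r'| |]; simpl in *; try easy; lra.
Qed.

Lemma I_nonempty a b : Rbar_lt a b -> exists t, inI a b t.
Proof.
  intros H. destruct a as [r| |]; destruct b as [r'| |]; simpl in *; try easy.
  - exists ((r+r')/2); split; simpl; lra.
  - exists (r+1); split; simpl; try easy; lra.
  - exists (r'-1); split; simpl; try easy; lra.
  - exists 0; split; simpl; easy.
Qed.

Lemma is_derive_val (f : R -> R) (x l l' : R) : is_derive f x l -> l = l' -> is_derive f x l'.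
Proof. intros H ->; exact H. Qed.

Lemma const_on a b (f : R -> R) :
  (forall t, inI a b t -> is_derive f t 0) ->
  forall t1 t2, inI a b t1 -> inI a b t2 -> f t1 = f t2.
Proof.
  intros Hd t1 t2 H1 H2.
  assert (Hin : forall t, Rmin t1 t2 <= t <= Rmax t1 t2 -> inI a b t).
  { intros t Ht. destruct (Rle_dec t1 t2).
    - rewrite Rmin_left, Rmax_right in Ht by lra. exact (I_conv _ _ _ _ _ H1 H2 Ht).
    - rewrite Rmin_right, Rmax_left in Ht by lra. exact (I_conv _ _ _ _ _ H2 H1 Ht). }
  destruct (MVT_gen f t1 t2 (fun _ => 0)) as [c [_ Hc]].
  - intros x Hx. apply Hd, Hin; lra.
  - intros x Hx. apply continuity_pt_filterlim. apply (ex_derive_continuous f).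
    eexists; apply Hd, Hin; lra.
  - lra.
Qed.

Lemma ivt_I a b (f df : R -> R) :
  (forall t, inI a b t -> is_derive f t (df t)) ->
  forall t1 t2 y, inI a b t1 -> inI a b t2 -> t1 <= t2 -> f t1 <= y <= f t2 ->
  exists t, t1 <= t <= t2 /\ f t = y.
Proof.
  intros Hd t1 t2 y H1 H2 Hle Hy.
  destruct (Req_dec (f t1) y) as [E|E]. { exists t1; split; [lra|easy]. }
  destruct (Req_dec (f t2) y) as [E'|E']. { exists t2; split; [lra|easy]. }
  destruct (Req_dec t1 t2) as [E''|E'']. { subst; lra. }
  destruct (IVT_interv (fun t => f t - y) t1 t2) as [t [Ht Hft]]; try lra.
  - intros x Hx. apply (continuity_pt_minus (fun t => f t) (fun _ => y)).
    + apply continuity_pt_filterlim. apply (ex_derive_continuous f).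
      eexists; apply Hd. apply (I_conv _ _ _ _ _ H1 H2); lra.
    + apply continuity_pt_const. intros u v; reflexivity.
  - exists t. split; [lra|lra].
Qed.
Lemma inv_deriv a b (f df tau : R -> R) :
  (forall t, inI a b t -> is_derive f t (df t)) ->
  (forall t, inI a b t -> 0 < df t) ->
  (forall t, inI a b t -> tau (f t) = t) ->
  forall t0, inI a b t0 -> is_derive tau (f t0) (1 / df t0).
Proof.
  intros Hd Hpos Htau t0 H0.
  assert (Hinc : forall x y, inI a b x -> inI a b y -> x < y -> f x < f y).
  { intros x y [Hx1 Hx2] [Hy1 Hy2] Hxy.
    apply (incr_function f a b df); auto.
    - intros u Hu1 Hu2; apply Hd; split; auto.
    - intros u Hu1 Hu2; apply Hpos; split; auto. }
  destruct (I_left _ _ _ H0) as [t1 [H1 Ht1]].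
  destruct (I_right _ _ _ H0) as [t2 [H2 Ht2]].
  assert (Hin : forall t, t1 <= t <= t2 -> inI a b t).
  { intros t Ht; exact (I_conv _ _ _ _ _ H1 H2 Ht). }
  assert (Hcomp : forall y, f t1 <= y <= f t2 -> f (tau y) = y).
  { intros y Hy. destruct (ivt_I a b f df Hd t1 t2 y H1 H2 ltac:(lra) Hy) as [t [Ht Hft]].
    rewrite <- Hft, Htau; auto. }
  assert (Hcf : forall t, t1 <= t <= t2 -> continuity_pt f t).
  { intros t Ht. apply continuity_pt_filterlim. apply (ex_derive_continuous f).
    eexists; apply Hd, Hin; lra. }
  assert (Hf01 : f t1 < f t0) by (apply Hinc; auto).
  assert (Hf02 : f t0 < f t2) by (apply Hinc; auto).
  assert (Hcont : continuity_pt tau (f t0)).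
  { apply (continuity_pt_recip_prelim f tau t1 t2); try lra.
    - intros x y Hx Hxy Hy; apply Hinc; auto; apply Hin; lra.
    - intros x Hx; unfold comp, id; apply Htau, Hin; lra.
    - exact Hcf. }
  assert (E1 : tau (f t1) = t1) by (apply Htau; auto).
  assert (E2 : tau (f t2) = t2) by (apply Htau; auto).
  assert (E0 : tau (f t0) = t0) by (apply Htau; auto).
  unshelve refine (let Prf : forall a0, tau (f t1) <= a0 <= tau (f t2) -> derivable_pt f a0 :=
            fun a0 H => exist _ (df a0) _ in _).
  { apply is_derive_Reals, Hd, Hin. rewrite E1, E2 in H. exact H. }
  assert (Hincr : tau (f t1) <= tau (f t0) <= tau (f t2)) by (rewrite E1, E2, E0; lra).
  assert (Hneq : derive_pt f (tau (f t0)) (Prf (tau (f t0)) Hincr) <> 0).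
  { unfold derive_pt, Prf; simpl. rewrite E0. specialize (Hpos t0 H0); lra. }
  pose proof (derivable_pt_lim_recip_interv f tau (f t1) (f t2) (f t0) Prf Hcont
                ltac:(lra) ltac:(lra) Hincr) as HH.
  specialize (HH (fun x Hx => Hcomp x Hx) Hneq).
  unfold derive_pt, Prf in HH; simpl in HH. rewrite E0 in HH.
  apply is_derive_Reals; exact HH.
Qed.
Lemma pnorm_gam c m px py pz : 0 < c -> 0 < m ->
  pnorm c m px py pz = m*c*sqrt(1+((px/(m*c))^2+(py/(m*c))^2+(pz/(m*c))^2)).
Proof.
  intros Hc Hm. unfold pnorm.
  replace (m^2*c^2 + (px^2+py^2+pz^2)) with ((m*c)^2 * (1+((px/(m*c))^2+(py/(m*c))^2+(pz/(m*c))^2))).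
  2:{ field. nra. }
  rewrite sqrt_mult_alt by (apply pow2_ge_0).
  rewrite sqrt_pow2 by nra. reflexivity.
Qed.

Lemma pnorm_sq c m px py pz :
  pnorm c m px py pz ^ 2 = m^2*c^2 + (px^2+py^2+pz^2).
Proof.
  unfold pnorm. rewrite <- Rsqr_pow2. apply Rsqr_sqrt. nra.
Qed.

Lemma pnorm_bnd c m px py pz : 0 < c -> 0 < m ->
  pz < pnorm c m px py pz /\ - pz < pnorm c m px py pz /\ 0 < pnorm c m px py pz.
Proof.
  intros Hc Hm.
  assert (H : Rabs pz < pnorm c m px py pz).
  { unfold pnorm. rewrite <- sqrt_Rsqr_abs. apply sqrt_lt_1_alt.
    unfold Rsqr. split; [nra|]. assert (0 < m*c) by nra. nra. }
  pose proof (Rabs_pos pz). split; [|split].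
  - pose proof (Rle_abs pz); lra.
  - pose proof (Rle_abs (-pz)); rewrite Rabs_Ropp in *; lra.
  - lra.
Qed.

Lemma dA_comp (A : R -> R -> R) (z : R -> R) t dz : differentiable2 A -> is_derive z t dz ->
  is_derive (fun t => A t (z t)) t (partial_t A t (z t) * 1 + partial_z A t (z t) * dz).
Proof.
  intros HA Hz. apply is_derive_Reals.
  apply (derivable_pt_lim_comp_2d A (fun t => t) z t).
  - apply HA.
  - apply derivable_pt_lim_id.
  - apply is_derive_Reals; exact Hz.
Qed.

Lemma dAhat (A : R -> R -> R) c xi zz : differentiable2 A -> c <> 0 ->
  is_derive (fun zz => hatF c A xi zz) zz
   (partial_t A ((xi+zz)/c) zz * (1/c) + partial_z A ((xi+zz)/c) zz * 1).
Proof.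
  intros HA Hc. apply is_derive_Reals. unfold hatF.
  apply (derivable_pt_lim_comp_2d A (fun zz => (xi+zz)/c) (fun zz => zz) zz).
  - apply HA.
  - apply is_derive_Reals. auto_derive. all: try exact I. all: try (change (AbsRing.sort R_AbsRing) with R in *; field; auto).
  - apply derivable_pt_lim_id.
Qed.

Lemma hat_at c (A : R -> R -> R) t zt : c <> 0 -> hatF c A (c*t - zt) zt = A t zt.
Proof. intros Hc. unfold hatF. f_equal. field. auto. Qed.

Theorem proposition4
  (c m q : R) (A0 Ax Ay Az : R -> R -> R)
  (a b : Rbar) (x y z px py pz : R -> R) :
  0 < c -> 0 < m -> q <> 0 ->
  differentiable2 A0 -> differentiable2 Ax -> differentiable2 Ay -> differentiable2 Az ->
  (* the motion, on the open time interval I = ]a, b[ *)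
  Rbar_lt a b ->
  (forall t : R, Rbar_lt a t -> Rbar_lt t b ->
     let N := pnorm c m (px t) (py t) (pz t) in
     let wx := px t / N in let wy := py t / N in let wz := pz t / N in
     is_derive px t (q * Efx c Ax t (z t)
                     + (wy * (q * Bfz t (z t)) - wz * (q * Bfy Ax t (z t)))) /\
     is_derive py t (q * Efy c Ay t (z t)
                     + (wz * (q * Bfx Ay t (z t)) - wx * (q * Bfz t (z t)))) /\
     is_derive pz t (q * Efz c A0 Az t (z t)
                     + (wx * (q * Bfy Ax t (z t)) - wy * (q * Bfx Ay t (z t)))) /\
     is_derive x t (c * px t / N) /\
     is_derive y t (c * py t / N) /\
     is_derive z t (c * pz t / N)) ->
  (* xi(t) = c t - z(t) is strictly increasing on I *)
  (forall t1 t2 : R, Rbar_lt a t1 -> Rbar_lt t1 b -> Rbar_lt a t2 -> Rbar_lt t2 b ->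
     t1 < t2 -> c * t1 - z t1 < c * t2 - z t2) /\
  exists Kx Ky : R,
  (* for the inverse map xi |-> t-hat(xi) (any left inverse of xi on I) *)
  forall tau : R -> R,
  (forall t : R, Rbar_lt a t -> Rbar_lt t b -> tau (c * t - z t) = t) ->
  let ux t := px t / (m * c) in
  let uy t := py t / (m * c) in
  let uz t := pz t / (m * c) in
  let gam t := sqrt (1 + (ux t ^ 2 + uy t ^ 2 + uz t ^ 2)) in
  let s t := gam t - uz t in
  let zh xi := z (tau xi) in
  let sh xi := s (tau xi) in
  let vh xi zz := vhat c m q Kx Ky Ax Ay xi zz in
  let J xi := exists t : R, Rbar_lt a t /\ Rbar_lt t b /\ xi = c * t - z t in
  (forall xi, J xi ->
     ux (tau xi) = q / (m * c^2) * (Kx - hatF c Ax xi (zh xi)) /\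
     uy (tau xi) = q / (m * c^2) * (Ky - hatF c Ay xi (zh xi))) /\
  (forall xi, J xi ->
     is_derive zh xi ((1 + vh xi (zh xi)) / (2 * sh xi ^ 2) - 1 / 2)) /\
  (forall xi, J xi ->
     ex_derive sh xi /\
     m * c^2 * Derive sh xi =
       - q * hatF c (Efz c A0 Az) xi (zh xi)
       + m * c^2 / (2 * sh xi) * Derive (fun zz => vh xi zz) (zh xi)) /\
  (forall xi, J xi ->
     0 < sh xi /\
     gam (tau xi) = (1 + vh xi (zh xi) + sh xi ^ 2) / (2 * sh xi) /\
     uz (tau xi) = gam (tau xi) - sh xi /\
     c * tau xi = xi + zh xi) /\
  (forall xi0 xi, J xi0 -> J xi ->
     is_RInt (fun zeta => ux (tau zeta) / sh zeta) xi0 xi (x (tau xi) - x (tau xi0)) /\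
     is_RInt (fun zeta => uy (tau zeta) / sh zeta) xi0 xi (y (tau xi) - y (tau xi0)) /\
     is_RInt (fun zeta => uz (tau zeta) / sh zeta) xi0 xi (z (tau xi) - z (tau xi0))).
Proof.
  intros Hc Hm Hq HA0 HAx HAy HAz Hab Hmot.
  set (N := fun t => pnorm c m (px t) (py t) (pz t)).
  set (Dpx := fun t => q * Efx c Ax t (z t) + (py t / N t * (q * Bfz t (z t)) - pz t / N t * (q * Bfy Ax t (z t)))).
  set (Dpy := fun t => q * Efy c Ay t (z t) + (pz t / N t * (q * Bfx Ay t (z t)) - px t / N t * (q * Bfz t (z t)))).
  set (Dpz := fun t => q * Efz c A0 Az t (z t) + (px t / N t * (q * Bfy Ax t (z t)) - py t / N t * (q * Bfx Ay t (z t)))).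
  assert (HM : forall t, inI a b t ->
    is_derive px t (Dpx t) /\ is_derive py t (Dpy t) /\ is_derive pz t (Dpz t) /\
    is_derive x t (c * px t / N t) /\ is_derive y t (c * py t / N t) /\ is_derive z t (c * pz t / N t)).
  { intros t [H1 H2]. exact (Hmot t H1 H2). }
  clear Hmot.
  assert (HNb : forall t, pz t < N t /\ - pz t < N t /\ 0 < N t).
  { intros t; apply pnorm_bnd; auto. }
  assert (HN2 : forall t, N t ^ 2 = m^2*c^2 + (px t^2+py t^2+pz t^2)).
  { intros t; apply pnorm_sq. }
  set (f := fun t => c * t - z t).
  set (df := fun t => c - c * pz t / N t).
  assert (Hdf : forall t, inI a b t -> is_derive f t (df t)).
  { intros t Ht. destruct (HM t Ht) as (_&_&_&_&_&Hz).
    unfold f, df. apply (is_derive_minus (fun t => c * t) z t c); [|exact Hz].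
    apply is_derive_Reals. auto_derive. all: try exact I. all: try (change (AbsRing.sort R_AbsRing) with R in *; ring). }
  assert (Hpos : forall t, inI a b t -> 0 < df t).
  { intros t _. unfold df. destruct (HNb t) as (H1&H2&H3).
    replace (c - c * pz t / N t) with (c * (N t - pz t) / N t) by (field; lra).
    apply Rdiv_lt_0_compat; nra. }
  split.
  { intros t1 t2 H1 H2 H3 H4 H5.
    apply (incr_function f a b df); auto.
    - intros u Hu1 Hu2; apply Hdf; split; auto.
    - intros u Hu1 Hu2; apply Hpos; split; auto. }
  destruct (I_nonempty a b Hab) as [t0 Ht0].
  exists (c * px t0 / q + Ax t0 (z t0)), (c * py t0 / q + Ay t0 (z t0)).
  set (Kx := c * px t0 / q + Ax t0 (z t0)).
  set (Ky := c * py t0 / q + Ay t0 (z t0)).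
  assert (HPx : forall t, inI a b t -> is_derive (fun t => px t + q / c * Ax t (z t)) t 0).
  { intros t Ht. destruct (HM t Ht) as (Hx&_&_&_&_&Hz). destruct (HNb t) as (_&_&HN).
    eapply is_derive_val.
    - apply (is_derive_plus px (fun t => q / c * Ax t (z t))); [exact Hx|].
      apply (is_derive_scal (fun t => Ax t (z t))). exact (dA_comp Ax z t _ HAx Hz).
    - unfold Dpx, Efx, Bfz, Bfy, plus; simpl. field. split; lra. }
  assert (HPy : forall t, inI a b t -> is_derive (fun t => py t + q / c * Ay t (z t)) t 0).
  { intros t Ht. destruct (HM t Ht) as (_&Hy&_&_&_&Hz). destruct (HNb t) as (_&_&HN).
    eapply is_derive_val.
    - apply (is_derive_plus py (fun t => q / c * Ay t (z t))); [exact Hy|].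
      apply (is_derive_scal (fun t => Ay t (z t))). exact (dA_comp Ay z t _ HAy Hz).
    - unfold Dpy, Efy, Bfz, Bfx, plus; simpl. field. split; lra. }
  assert (HKx : forall t, inI a b t -> Kx - Ax t (z t) = c * px t / q).
  { intros t Ht. pose proof (const_on a b _ HPx t t0 Ht Ht0) as E. cbv beta in E.
    unfold Kx. replace (Ax t0 (z t0)) with ((c/q)*(px t + q/c*Ax t (z t) - px t0))
      by (rewrite E; field; split; lra). field; split; lra. }
  assert (HKy : forall t, inI a b t -> Ky - Ay t (z t) = c * py t / q).
  { intros t Ht. pose proof (const_on a b _ HPy t t0 Ht Ht0) as E. cbv beta in E.
    unfold Ky. replace (Ay t0 (z t0)) with ((c/q)*(py t + q/c*Ay t (z t) - py t0))
      by (rewrite E; field; split; lra). field; split; lra. }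
  clearbody Kx Ky. clear HPx HPy.
  intros tau Htau0.
  assert (Htau : forall t, inI a b t -> tau (f t) = t).
  { intros t [H1 H2]; exact (Htau0 t H1 H2). }
  clear Htau0.
  assert (Hdtau : forall t, inI a b t -> is_derive tau (f t) (1 / df t)).
  { intros t Ht; apply (inv_deriv a b f df tau); auto. }
  intros ux uy uz gam s zh sh vh J.
  assert (Hgam : forall t, gam t = N t / (m * c)).
  { intros t. unfold gam, N, ux, uy, uz. rewrite (pnorm_gam c m); auto. field. lra. }
  assert (HJ : forall xi, J xi -> exists t, inI a b t /\ xi = f t).
  { intros xi [t (H1&H2&H3)]. exists t. split; [split; auto| exact H3]. }
  assert (Hs : forall t, s t = (N t - pz t) / (m * c)).
  { intros t. unfold s. rewrite Hgam. unfold uz. field. lra. }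
  assert (Hhat : forall (A : R -> R -> R) t, hatF c A (f t) (z t) = A t (z t)).
  { intros A t. unfold f. apply hat_at. lra. }
  assert (Hvh : forall t, inI a b t -> vh (f t) (z t) = (px t ^ 2 + py t ^ 2) / (m * c) ^ 2).
  { intros t Ht. unfold vh, vhat. rewrite !Hhat, HKx, HKy by auto. field. split; lra. }
  assert (Hpp : forall t, px t ^ 2 + py t ^ 2 = N t ^ 2 - m^2 * c^2 - pz t ^ 2).
  { intros t. rewrite HN2. ring. }
  split.
  { intros xi HJxi. destruct (HJ xi HJxi) as [t [Ht ->]].
    unfold zh, ux, uy. rewrite Htau by auto. rewrite !Hhat, HKx, HKy by auto.
    split; field; split; lra. }
  split.
  { intros xi HJxi. destruct (HJ xi HJxi) as [t [Ht ->]].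
    destruct (HM t Ht) as (_&_&_&_&_&Hz). destruct (HNb t) as (HN1&HN2'&HN3).
    unfold zh. eapply is_derive_val.
    - apply (is_derive_comp z tau (f t)); [rewrite Htau by auto; exact Hz| exact (Hdtau t Ht)].
    - unfold sh. rewrite Htau by auto. rewrite Hvh, Hs, Hpp by auto.
      unfold df, scal; simpl. unfold mult; simpl. field. repeat split; (lra || (intro; nra)). }
  assert (Hsd : forall t, inI a b t -> is_derive s t
     (((px t * Dpx t + py t * Dpy t + pz t * Dpz t) / N t - Dpz t) / (m * c))).
  { intros t Ht. destruct (HM t Ht) as (Hx&Hy&Hz&_&_&_). destruct (HNb t) as (HN1&HN2'&HN3).
    apply (is_derive_ext (fun t => (sqrt (m^2*c^2 + (px t^2+py t^2+pz t^2)) - pz t)/(m*c))).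
    { intros u. rewrite Hs. reflexivity. }
    auto_derive.
    - repeat split; try (eexists; eassumption).
      assert (0 < m * c) by nra. nra.
    - replace (Derive (fun x0 => px x0) t) with (Dpx t) by (symmetry; apply is_derive_unique; exact Hx).
      replace (Derive (fun x0 => py x0) t) with (Dpy t) by (symmetry; apply is_derive_unique; exact Hy).
      replace (Derive (fun x0 => pz x0) t) with (Dpz t) by (symmetry; apply is_derive_unique; exact Hz).
      replace (sqrt (m * (m * 1) * (c * (c * 1)) + (px t * (px t * 1) + py t * (py t * 1) + pz t * (pz t * 1))))
        with (N t) by (unfold N, pnorm; f_equal; ring).
      field. repeat split; lra. }
  assert (Hshd : forall t, inI a b t -> is_derive sh (f t)
     (1 / df t * (((px t * Dpx t + py t * Dpy t + pz t * Dpz t) / N t - Dpz t) / (m * c)))).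
  { intros t Ht. unfold sh. apply (is_derive_comp s tau (f t)); [rewrite Htau by auto; apply Hsd; auto | apply Hdtau; auto]. }
  assert (Hft : forall t, (f t + z t) / c = t).
  { intros t. unfold f. field. lra. }
  split.
  { intros xi HJxi. destruct (HJ xi HJxi) as [t [Ht ->]]. split.
    { eexists; apply Hshd; auto. }
    rewrite (is_derive_unique _ _ _ (Hshd t Ht)).
    unfold zh. rewrite Htau by auto.
    pose proof (dAhat Ax c (f t) (z t) HAx ltac:(lra)) as DAx.
    pose proof (dAhat Ay c (f t) (z t) HAy ltac:(lra)) as DAy.
    rewrite Hft in DAx, DAy.
    erewrite (is_derive_unique (fun zz => vh (f t) zz)).
    2:{ unfold vh, vhat. auto_derive.
        - repeat split; eexists; eassumption.
        - reflexivity. }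
    replace (Derive (fun x0 => hatF c Ax (f t) x0) (z t)) with
      (partial_t Ax t (z t) * (1 / c) + partial_z Ax t (z t) * 1) by (symmetry; apply is_derive_unique; exact DAx).
    replace (Derive (fun x0 => hatF c Ay (f t) x0) (z t)) with
      (partial_t Ay t (z t) * (1 / c) + partial_z Ay t (z t) * 1) by (symmetry; apply is_derive_unique; exact DAy).
    rewrite !Hhat.
    replace Kx with (c * px t / q + Ax t (z t)) by (rewrite <- HKx by auto; ring).
    replace Ky with (c * py t / q + Ay t (z t)) by (rewrite <- HKy by auto; ring).
    unfold sh. rewrite Htau by auto. rewrite Hs.
    destruct (HNb t) as (HN1&HN2'&HN3).
    unfold df, Dpx, Dpy, Dpz, Efx, Efy, Efz, Bfx, Bfy, Bfz.
    field. repeat split; (lra || (intro; nra)). }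
  split.
  { intros xi HJxi. destruct (HJ xi HJxi) as [t [Ht ->]].
    destruct (HNb t) as (HN1&HN2'&HN3).
    unfold sh, zh. rewrite Htau by auto.
    split; [|split; [|split]].
    - rewrite Hs. apply Rdiv_lt_0_compat; nra.
    - rewrite Hgam, Hvh, Hs, Hpp by auto. field. repeat split; (lra || (intro; nra)).
    - unfold s. ring.
    - unfold f. ring. }
  assert (Hinc : forall t1 t2, inI a b t1 -> inI a b t2 -> t1 < t2 -> f t1 < f t2).
  { intros t1 t2 [H1 H2] [H3 H4] H5.
    apply (incr_function f a b df); auto.
    - intros u Hu1 Hu2; apply Hdf; split; auto.
    - intros u Hu1 Hu2; apply Hpos; split; auto. }
  assert (HJc : forall xi0 xi zeta, J xi0 -> J xi -> Rmin xi0 xi <= zeta <= Rmax xi0 xi ->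
     exists t, inI a b t /\ zeta = f t).
  { intros xi0 xi zeta H0 H1 Hz.
    destruct (HJ xi0 H0) as [t1 [Ht1 ->]]. destruct (HJ xi H1) as [t2 [Ht2 ->]].
    destruct (Rle_dec t1 t2) as [Hle|Hle].
    - assert (f t1 <= f t2).
      { destruct (Req_dec t1 t2) as [->|]; [lra|]. left; apply Hinc; auto; lra. }
      rewrite Rmin_left, Rmax_right in Hz by lra.
      destruct (ivt_I a b f df Hdf t1 t2 zeta Ht1 Ht2 Hle Hz) as [t [Ht Hft0]].
      exists t; split; [exact (I_conv _ _ _ _ _ Ht1 Ht2 Ht)| auto].
    - assert (f t2 < f t1) by (apply Hinc; auto; lra).
      rewrite Rmin_right, Rmax_left in Hz by lra.
      destruct (ivt_I a b f df Hdf t2 t1 zeta Ht2 Ht1 ltac:(lra) Hz) as [t [Ht Hft0]].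
      exists t; split; [exact (I_conv _ _ _ _ _ Ht2 Ht1 Ht)| auto]. }
  assert (Hint : forall X P : R -> R,
     (forall t, inI a b t -> is_derive X t (c * P t / N t)) ->
     (forall t, inI a b t -> ex_derive P t) ->
     forall xi0 xi, J xi0 -> J xi ->
     is_RInt (fun zeta => P (tau zeta) / (m * c) / sh zeta) xi0 xi (X (tau xi) - X (tau xi0))).
  { intros X P HX HP xi0 xi H0 H1.
    apply (is_RInt_derive (fun zeta => X (tau zeta))).
    - intros zeta Hz. destruct (HJc xi0 xi zeta H0 H1 Hz) as [t [Ht ->]].
      destruct (HNb t) as (HN1&HN2'&HN3).
      eapply is_derive_val.
      + apply (is_derive_comp X tau (f t)); [rewrite Htau by auto; apply HX; auto | apply Hdtau; auto].
      + unfold sh. rewrite Htau by auto. rewrite Hs. unfold df, scal; simpl; unfold mult; simpl.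
        field. repeat split; (lra || (intro; nra)).
    - intros zeta Hz. destruct (HJc xi0 xi zeta H0 H1 Hz) as [t [Ht ->]].
      destruct (HNb t) as (HN1&HN2'&HN3).
      apply (ex_derive_continuous (fun zeta => P (tau zeta) / (m * c) / sh zeta)). apply ex_derive_div.
      + apply ex_derive_div; [|apply ex_derive_const|intro; nra].
        apply (ex_derive_comp P tau); [rewrite Htau by auto; apply HP; auto| eexists; apply Hdtau; auto].
      + eexists; apply Hshd; auto.
      + unfold sh. rewrite Htau by auto. rewrite Hs. apply Rgt_not_eq, Rdiv_lt_0_compat; nra. }
  intros xi0 xi H0 H1. split; [|split].
  - apply Hint; auto; intros t Ht; destruct (HM t Ht) as (Hx&Hy&Hz&Hx'&Hy'&Hz'); auto; eexists; eauto.
  - apply Hint; auto; intros t Ht; destruct (HM t Ht) as (Hx&Hy&Hz&Hx'&Hy'&Hz'); auto; eexists; eauto.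
  - apply Hint; auto; intros t Ht; destruct (HM t Ht) as (Hx&Hy&Hz&Hx'&Hy'&Hz'); auto; eexists; eauto.
Qed.
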